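(* Let $\pi$ be a signed permutation with $n$ elements and let $H_\pi$ be its circle graph. Then $d_r(\pi) \geq r(A(H_\pi))$, where $r$ denotes rank over $GF(2)$.
   Context: A signed permutation with $n$ elements is a sequence $\pi=(\pi_1,\dots,\pi_n)$ of nonzero integers with $\{|\pi_1|,\dots,|\pi_n|\}=\{1,\dots,n\}$. A reversal replaces a contiguous block $(\pi_i,\pi_{i+1},\dots,\pi_j)$ by $(-\pi_j,\dots,-\pi_{i+1},-\pi_i)$. The reversal distance $d_r(\pi)$ is the minimum number of reversals transforming $\pi$ into the identity $(1,2,\dots,n)$. Construction of $H_\pi$. Arrange cyclically the segments $I_1,\pi_1,I_2,\pi_2,\dots,I_n,\pi_n,I_{n+1},\$$ (and back to $I_1$); the $I_k$ are intermediate segments and $\$$ is an anchor. Endpoint labels: a segment $i>0$ has left endpoint $v_{i-1}$ and right endpoint $v_i$; a segment $-i$ has left endpoint $v_i$ and right endpoint $v_{i-1}$; $\$$ has left endpoint $v_n$ and right endpoint $v_0$; each $I_k$ has as left endpoint the label of the right endpoint of the preceding segment and as right endpoint the label of the left endpoint of the following segment. $G_\pi$ is the 4-regular multigraph on $\{v_0,\dots,v_n\}$ with one edge per segment joining its endpoint labels. A circuit partition (set of closed walks using every edge exactly once in total) determines at each vertex a route (pairing of the four half-edges). $P_A$ is the single Eulerian circuit following the cyclic order of segments; $P_B$ is the circuit partition whose route at each vertex pairs the two non-intermediate half-edges together and the two intermediate half-edges together. A vertex $v$ is oriented if changing the route of $P_A$ at $v$ to that of $P_B$ at $v$ yields a single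 circuit. $H_\pi$ is the graph (loops allowed) on $\{v_0,\dots,v_n\}$ where distinct $u,w$ are adjacent iff their two occurrences interlace in the cyclic vertex sequence of the Eulerian circuit $P_A$, and $v$ is looped iff $v$ is oriented. $A(H)$ is the adjacency matrix over $GF(2)$, with diagonal entry $1$ exactly at looped vertices. *)

(* Defs.v *)
From HB Require Import structures.
From mathcomp Require Import all_boot all_order all_algebra.
Set Implicit Arguments. Unset Strict Implicit. Unset Printing Implicit Defensive.
Import GRing.Theory Num.Theory.

Definition signed_perm (n : nat) (s : seq int) : bool :=
  (size s == n) && perm_eq (map absz s) (iota 1 n).

(* Reversal of the block s_i..s_j (0-based positions, i <= j < size s). *)
Definition reversal (i j : nat) (s : seq int) : seq int :=
  take i s ++ map (fun x => (- x)%R) (rev (drop i (take j.+1 s))) ++ drop j.+1 s.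

Definition id_sperm (n : nat) : seq int := map Posz (iota 1 n).

Definition apply_revs (rs : seq (nat * nat)) (s : seq int) : seq int :=
  foldl (fun t ij => reversal ij.1 ij.2 t) s rs.

Definition valid_revs (n : nat) (rs : seq (nat * nat)) : bool :=
  all (fun ij => (ij.1 <= ij.2) && (ij.2 < n)) rs.

Definition sorts (n : nat) (s : seq int) (rs : seq (nat * nat)) : bool :=
  valid_revs n rs && (apply_revs rs s == id_sperm n).

Definition reversal_distance (n : nat) (s : seq int) (d : nat) : Prop :=
  (exists rs, sorts n s rs /\ size rs = d) /\
  (forall rs, sorts n s rs -> d <= size rs).

(* Segments are indexed t = 0 .. 2n+1 in cyclic order:
   t = 2k (k = 0..n)   : intermediate segment I_(k+1)
   t = 2k+1 (k < n)    : segment pi_(k+1)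
   t = 2n+1            : anchor $.
   Vertex v_i is represented by the natural number i.  b = false: left end,
   b = true: right end. *)

Definition seg_left (x : int) : nat := if (0 < x)%R then (absz x).-1 else absz x.
Definition seg_right (x : int) : nat := if (0 < x)%R then absz x else (absz x).-1.

Definition nonint_end (n : nat) (s : seq int) (t : nat) (b : bool) : nat :=
  if t == (2 * n).+1 then (if b then 0 else n)
  else let x := nth 0%R s t./2 in if b then seg_right x else seg_left x.

Definition seg_end (n : nat) (s : seq int) (t : nat) (b : bool) : nat :=
  if odd t then nonint_end n s t b
  else if b then nonint_end n s t.+1 false
  else nonint_end n s (if t == 0 then (2 * n).+1 else t.-1) true.

(* half-edges: (segment, end) *)
Definition hedge (n : nat) := ('I_((2 * n).+2) * bool)%type.

Definition label (n : nat) (s : seq int) (h : hedge n) : nat := seg_end n s h.1 h.2.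
Definition intermediate (n : nat) (h : hedge n) : bool := ~~ odd h.1.

Definition edge_mate (n : nat) (h : hedge n) : hedge n := (h.1, ~~ h.2).

(* route of P_A: right end of segment t is paired with left end of segment t+1 *)
Definition routeA (n : nat) (h : hedge n) : hedge n :=
  if h.2 then (ordS h.1, false) else (ord_pred h.1, true).

(* route of P_B: pair the two non-intermediate half-edges at a vertex together,
   and the two intermediate ones together *)
Definition routeB (n : nat) (s : seq int) (h : hedge n) : hedge n :=
  odflt h [pick y : hedge n | (y != h) && (label s y == label s h)
                              && (intermediate y == intermediate h)].

Definition route_switch (n : nat) (s : seq int) (v : nat) (h : hedge n) : hedge n :=
  if label s h == v then routeB s h else routeA h.

(* The circuit partition given by a route (transition system) consists of a single
   circuit iff all half-edges are connected by route- and edge-steps. *)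
Definition single_circuit (n : nat) (route : hedge n -> hedge n) : bool :=
  [forall x : hedge n, forall y : hedge n,
     connect (fun a b : hedge n => (b == route a) || (b == edge_mate a)) x y].

Definition oriented (n : nat) (s : seq int) (v : nat) : bool :=
  single_circuit (@route_switch n s v).

(* cyclic vertex sequence of the Eulerian circuit P_A
   (the vertex passed after traversing segment t) *)
Definition circuitA (n : nat) (s : seq int) : seq nat :=
  [seq seg_end n s t true | t <- iota 0 (2 * n).+2].

(* the two occurrences of u and w interlace: exactly one occurrence of w lies
   strictly between the two occurrences of u *)
Definition interlace (n : nat) (s : seq int) (u w : nat) : bool :=
  let c := circuitA n s in
  let r := drop (index u c).+1 c in
  count (pred1 w) (take (index u r) r) == 1.

Definition adjH (n : nat) (s : seq int) : 'M['F_2]_n.+1 :=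
  \matrix_(i < n.+1, j < n.+1)
     (if i == j then (oriented n s i : nat)%:R
      else (interlace n s i j : nat)%:R)%R.

(* Main.v *)
Require Import Defs.
From HB Require Import structures.
From mathcomp Require Import all_boot all_order all_algebra.
From mathcomp Require Import zify.
Set Implicit Arguments. Unset Strict Implicit. Unset Printing Implicit Defensive.
Import GRing.Theory.


Lemma val_ordS m (t : 'I_m) : nat_of_ord (ordS t) = if t.+1 == m then 0 else t.+1.
Proof.
rewrite /=; case: eqP => [->|h]; first by rewrite modnn.
by rewrite modn_small //; have := ltn_ord t; lia.
Qed.

Lemma val_ord_pred m (t : 'I_m) : nat_of_ord (ord_pred t) = if nat_of_ord t == 0 then m.-1 else t.-1.
Proof.
rewrite /=; have ht := ltn_ord t; case: eqP => [->|h].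
  by rewrite add0n modn_small //; lia.
have -> : (t + m).-1 = t.-1 + m by lia.
by rewrite modnDr modn_small //; lia.
Qed.

Definition cf n s t := seg_end n s t true.

Lemma label_T n s (t : 'I_((2 * n).+2)) : label s (t, true) = cf n s t.
Proof. by []. Qed.

Lemma label_F n s (t : 'I_((2 * n).+2)) : label s (t, false) = cf n s (ord_pred t).
Proof.
rewrite /label /cf [X in _ = seg_end _ _ X _]val_ord_pred /seg_end /=.
case: (boolP (odd t)) => ho.
  have t0 : nat_of_ord t != 0 by case: (val t) ho.
  rewrite (negbTE t0) /=.
  have ht : t = (t.-1).+1 :> nat by lia.
  have -> : odd t.-1 = false by move: ho; rewrite {1}ht /= => /negbTE.
  by rewrite -ht.
case: eqP => [t0|t0] /=.
  by rewrite oddM /=.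
have ht : t = (t.-1).+1 :> nat by lia.
have -> : odd t.-1 = true by move: ho; rewrite {1}ht /= negbK.
by [].
Qed.


Definition Pos n s v (p : nat * nat) : bool :=
  [&& p.1 < (2 * n).+2, p.2 < (2 * n).+2, p.1 != p.2 &
   all (fun t => (cf n s t == v) == ((t == p.1) || (t == p.2))) (iota 0 (2 * n).+2)].

Lemma PosP n s v p : Pos n s v p ->
  forall t, t < (2 * n).+2 -> (cf n s t == v) = (t == p.1) || (t == p.2).
Proof.
case/and4P => _ _ _ /allP H t ht; have := H t; rewrite mem_iota add0n ht => /(_ isT) /eqP; apply.
Qed.

Lemma ordS_inj m : injective (@ordS m).
Proof. exact: can_inj (@ordSK m). Qed.

Lemma odd_ordS n (t : 'I_((2 * n).+2)) : odd (ordS t) = ~~ odd t.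
Proof.
rewrite val_ordS; case: eqP => [h|h] //=.
have -> : nat_of_ord t = (2 * n).+1 by lia.
by rewrite /= oddM.
Qed.

Lemma pred_eq m (t a : 'I_m) : (ord_pred t == a) = (t == ordS a).
Proof.
apply/eqP/eqP => [<-|->]; [by rewrite ord_predK | by rewrite ordSK].
Qed.

Lemma labv n s v (a b : 'I_((2 * n).+2)) : Pos n s v (nat_of_ord a, nat_of_ord b) ->
  forall z : hedge n, (label s z == v) =
   [|| z == (a, true), z == (b, true), z == (ordS a, false) | z == (ordS b, false)].
Proof.
move=> hp [t []].
  rewrite label_T (PosP hp) //= !xpair_eqE /= !andbT !andbF /= orbF.
  by [].
rewrite label_F (PosP hp); last exact: ltn_ord.
rewrite !(inj_eq (@ord_inj _)) !pred_eq !xpair_eqE /= !andbT !andbF.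
by [].
Qed.

Lemma routeB_eq n s (h y : hedge n) : y != h -> label s y = label s h ->
  intermediate y = intermediate h ->
  (forall z, z != h -> label s z = label s h -> intermediate z = intermediate h -> z = y) ->
  routeB s h = y.
Proof.
move=> yh ly iy H; rewrite /routeB; case: pickP => [z /andP [/andP [zh /eqP lz] /eqP iz]|H0].
  by rewrite (H z zh lz iz).
by move: (H0 y); rewrite yh ly iy !eqxx.
Qed.



Lemma PosC n s v a b : Pos n s v (a, b) -> Pos n s v (b, a).
Proof.
case/and4P=> h1 h2 h3 /allP h4; apply/and4P; split => //; first by rewrite eq_sym.
apply/allP => t ht; rewrite orbC; exact: h4.
Qed.

Lemma lab4 n s v (A B : 'I_((2 * n).+2)) : Pos n s v (nat_of_ord A, nat_of_ord B) ->
  [/\ label s (A, true) = v, label s (B, true) = v, label s (ordS A, false) = v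
    & label s (ordS B, false) = v].
Proof.
move=> hp; split; apply/eqP; by rewrite (labv hp) !eqxx ?orbT.
Qed.

Lemma rB_same_T n s v (A B : 'I_((2 * n).+2)) : Pos n s v (nat_of_ord A, nat_of_ord B) ->
  odd A = odd B -> routeB s (A, true) = (B, true).
Proof.
move=> hp hpar; have [l1 l2 l3 l4] := lab4 hp.
have hAB : nat_of_ord A != B by case/and4P: hp.
apply: routeB_eq.
- by rewrite xpair_eqE /= andbT -(inj_eq (@ord_inj _)) eq_sym.
- by rewrite l1 l2.
- by rewrite /intermediate /= hpar.
move=> z zh; rewrite l1 => /eqP; rewrite (labv hp).
case/or4P => /eqP ?; subst z; move: zh; rewrite /intermediate /= ?odd_ordS ?eqxx //; lia.
Qed.

Lemma rB_same_F n s v (A B : 'I_((2 * n).+2)) : Pos n s v (nat_of_ord A, nat_of_ord B) ->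
  odd A = odd B -> routeB s (ordS A, false) = (ordS B, false).
Proof.
move=> hp hpar; have [l1 l2 l3 l4] := lab4 hp.
have hAB : nat_of_ord A != B by case/and4P: hp.
apply: routeB_eq.
- by rewrite xpair_eqE /= andbT (inj_eq (@ordS_inj _)) -(inj_eq (@ord_inj _)) eq_sym.
- by rewrite l3 l4.
- by rewrite /intermediate /= ?odd_ordS hpar ?negbK.
move=> z zh; rewrite l3 => /eqP; rewrite (labv hp).
case/or4P => /eqP ?; subst z; move: zh; rewrite /intermediate /= ?odd_ordS ?eqxx //; lia.
Qed.

Lemma rB_diff_T n s v (A B : 'I_((2 * n).+2)) : Pos n s v (nat_of_ord A, nat_of_ord B) ->
  odd A = ~~ odd B -> routeB s (A, true) = (ordS B, false).
Proof.
move=> hp hpar; have [l1 l2 l3 l4] := lab4 hp.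
have hAB : nat_of_ord A != B by case/and4P: hp.
apply: routeB_eq.
- by rewrite xpair_eqE /= andbF.
- by rewrite l1 l4.
- by rewrite /intermediate /= ?odd_ordS hpar ?negbK.
move=> z zh; rewrite l1 => /eqP; rewrite (labv hp).
case/or4P => /eqP ?; subst z; move: zh; rewrite /intermediate /= ?odd_ordS ?eqxx //; lia.
Qed.

Lemma rB_diff_F n s v (A B : 'I_((2 * n).+2)) : Pos n s v (nat_of_ord A, nat_of_ord B) ->
  odd A = ~~ odd B -> routeB s (ordS A, false) = (B, true).
Proof.
move=> hp hpar; have [l1 l2 l3 l4] := lab4 hp.
have hAB : nat_of_ord A != B by case/and4P: hp.
apply: routeB_eq.
- by rewrite xpair_eqE /= andbF.
- by rewrite l3 l2.
- by rewrite /intermediate /= ?odd_ordS hpar ?negbK.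
move=> z zh; rewrite l3 => /eqP; rewrite (labv hp).
case/or4P => /eqP ?; subst z; move: zh; rewrite /intermediate /= ?odd_ordS ?eqxx //; lia.
Qed.

Lemma rs_other n s v (h : hedge n) : label s h != v -> route_switch s v h = routeA h.
Proof. by rewrite /route_switch => /negbTE ->. Qed.

Lemma rs_special n s v (h : hedge n) : label s h = v -> route_switch s v h = routeB s h.
Proof. by rewrite /route_switch => ->; rewrite eqxx. Qed.


Lemma val_iter m (x : 'I_m) k : nat_of_ord (iter k (@ordS m) x) = (x + k) %% m.
Proof.
elim: k => [|k IH]; first by rewrite addn0 modn_small.
by rewrite iterS /= IH -addn1 modnDml addn1 addnS.
Qed.

Lemma iter_neq m (x : 'I_m) k : k.+1 < m -> iter k (@ordS m) (ordS x) != x.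
Proof.
move=> hk; rewrite -iterSr -(inj_eq (@ord_inj _)) val_iter.
rewrite -{2}(modn_small (ltn_ord x)) -{2}[nat_of_ord x]addn0 eqn_modDl mod0n modn_small //.
Qed.

Lemma iter_cover m (x : 'I_m) (t : 'I_m) : exists2 k, k < m & t = iter k (@ordS m) x.
Proof.
have hx := ltn_ord x; have ht := ltn_ord t.
exists ((t + (m - x)) %% m); first by rewrite ltn_mod; lia.
apply: ord_inj; rewrite val_iter modnDmr.
have -> : x + (t + (m - x)) = t + m by lia.
by rewrite modnDr modn_small.
Qed.

Lemma oriented_same n s v (A B : 'I_((2 * n).+2)) : Pos n s v (nat_of_ord A, nat_of_ord B) ->
  odd A = odd B -> oriented n s v.
Proof.
move=> hp hpar; have hp' := PosC hp.
have hAB : nat_of_ord A != B by case/and4P: hp.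
rewrite /oriented /single_circuit.
pose e := (fun a b : hedge n => (b == route_switch s v a) || (b == edge_mate a)).
change [forall x, forall y, connect e x y].
pose mc x y := connect e x y && connect e y x.
have mcT x y z : mc x y -> mc y z -> mc x z.
  case/andP=> h1 h2 /andP [h3 h4]; apply/andP; split; [exact: connect_trans h1 h3|exact: connect_trans h4 h2].
have mcS x y : mc x y -> mc y x by case/andP=> h1 h2; apply/andP.
have mcE x y : y = route_switch s v x -> x = route_switch s v y -> mc x y.
  move=> h1 h2; apply/andP; split; apply: connect1; rewrite /e /=; apply/orP; left; apply/eqP => //.
have L1 t : mc (t, false) (t, true).
  by apply/andP; split; apply: connect1; rewrite /e /=; apply/orP; right.
have L2 t : t != A -> t != B -> mc (t, true) (ordS t, false).
  move=> tA tB; apply: (mcE _ _).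
    rewrite rs_other //= (labv hp) !xpair_eqE /= !andbT !andbF /= orbF.
    by rewrite (negbTE tA) (negbTE tB).
  rewrite rs_other /routeA /= ?ordSK // (labv hp) !xpair_eqE /= !andbT !andbF /=.
  by rewrite !(inj_eq (@ordS_inj _)) (negbTE tA) (negbTE tB).
have [l1 l2 l3 l4] := lab4 hp.
have L3 : mc (A, true) (B, true).
  by apply: (mcE _ _); rewrite rs_special ?l1 ?l2 // ?(rB_same_T hp) ?(rB_same_T hp').
have L4 : mc (ordS A, false) (ordS B, false).
  by apply: (mcE _ _); rewrite rs_special ?l3 ?l4 // ?(rB_same_F hp) ?(rB_same_F hp').
have Hall k : k < (2 * n).+2 -> mc (iter k (@ordS _) (ordS A), false) (ordS A, false).
  elim: k => [|k IH] hk; first by apply/andP; rewrite connect0.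
  have tA := iter_neq A hk.
  set t := iter k _ _ in tA IH *.
  rewrite iterS -/t.
  case: (eqVneq t B) => [tB|tB].
    by rewrite tB; apply: (mcS _ _) L4.
  apply: (mcT _ (t, false)); last exact: IH (ltnW hk).
  apply: (mcS _ _); apply: (mcT _ (t, true)) (L1 t) _; exact: L2.
have Hx (x : hedge n) : mc x (ordS A, false).
  case: x => t b; have [k hk ->] := iter_cover (ordS A) t.
  case: b; last exact: Hall.
  apply: (mcT _ _ _ _ (Hall k hk)); apply: (mcS _ _); exact: L1.
apply/forallP => x; apply/forallP => y.
have /andP [h1 _] := Hx x; have /andP [_ h2] := Hx y.
exact: connect_trans h1 h2.
Qed.

Lemma oriented_diff n s v (A B : 'I_((2 * n).+2)) : Pos n s v (nat_of_ord A, nat_of_ord B) ->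
  odd A = ~~ odd B -> ~~ oriented n s v.
Proof.
have hm : forall t : 'I_((2 * n).+2), nat_of_ord t < (2 * n).+2 by move=> t; exact: ltn_ord.
wlog lt : A B / A < B.
  move=> H hp hpar; have hAB : nat_of_ord A != B by case/and4P: hp.
  case: (ltngtP (nat_of_ord A) (nat_of_ord B)) => h; first exact: (H A B h hp hpar).
    apply: (H B A h (PosC hp)); by rewrite hpar negbK.
  by rewrite h eqxx in hAB.
move=> hp hpar.
rewrite /oriented /single_circuit.
pose e := (fun a b : hedge n => (b == route_switch s v a) || (b == edge_mate a)).
change (~~ [forall x, forall y, connect e x y]).
apply/negP => /forallP /(_ (B, true)) /forallP /(_ (A, true)) hc.
pose X := [pred h : hedge n | (A < h.1) && (h.1 <= B)].
suff cl : closed e X.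
  by have := closed_connect cl hc; rewrite !inE /= ltnn leqnn lt.
move=> x y /orP [/eqP ->|/eqP ->]; last by case: x.
case: x => t b; case: (boolP (label s (t, b) == v)) => hl.
  rewrite rs_special ?(eqP hl) //.
  move: hl; rewrite (labv hp) => /or4P [] /eqP [-> ->].
  - rewrite (rB_diff_T hp hpar); have := val_ordS B; move: (ordS B) => oB.
    rewrite !inE /=; have := hm B; case: eqP; lia.
  - rewrite (rB_diff_T (PosC hp)) ?hpar ?negbK //; have := val_ordS A; move: (ordS A) => oA.
    rewrite !inE /=; have := hm B; case: eqP; lia.
  - rewrite (rB_diff_F hp hpar); have := val_ordS A; move: (ordS A) => oA.
    rewrite !inE /=; have := hm B; case: eqP; lia.
  - rewrite (rB_diff_F (PosC hp)) ?hpar ?negbK //; have := val_ordS B; move: (ordS B) => oB.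
    rewrite !inE /=; have := hm B; case: eqP; lia.
have tf : (true == false) = false by [].
have ft : (false == true) = false by [].
rewrite rs_other //; move: hl.
case: b; rewrite (labv hp) !xpair_eqE ?eqxx ?tf ?ft ?andbT ?andbF ?orbF => hl.
  change (routeA (t, true)) with (ordS t, false).
  move: hl; rewrite -!(inj_eq (@ord_inj _)) => hl.
  have := val_ordS t; move: (ordS t) => ot.
  rewrite !inE /=; have := hm B; case: eqP; lia.
change (routeA (t, false)) with (ord_pred t, true).
have hl' : (nat_of_ord (ord_pred t) != A) && (nat_of_ord (ord_pred t) != B).
  by move: hl; rewrite !orFb -!pred_eq -!(inj_eq (@ord_inj _)) => /norP [-> ->].
move: hl'; have := val_ord_pred t; move: (ord_pred t) => ot.
rewrite !inE /=; have := hm B; have := hm t; case: eqP; lia.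
Qed.


Lemma oriented_pos n s v a b : Pos n s v (a, b) -> oriented n s v = (odd a == odd b).
Proof.
move=> hp; have [ha hb _] : [/\ a < (2 * n).+2, b < (2 * n).+2 & true] by case/and4P: hp.
have hp' : Pos n s v (nat_of_ord (Ordinal ha), nat_of_ord (Ordinal hb)) by [].
case: (boolP (odd a == odd b)) => h.
  by apply: (oriented_same hp'); apply/eqP.
apply/negbTE; apply: (oriented_diff hp') => /=; move: h; by case: (odd a); case: (odd b).
Qed.

Definition betw (a b x : nat) : bool := ((a < x) && (x < b)) || ((b < x) && (x < a)).

Lemma index_pos (c : seq nat) u i : i < size c -> nth 0 c i = u ->
  (forall t, t < i -> nth 0 c t != u) -> index u c = i.
Proof.
move=> hi hn hb.
have uc : u \in c by rewrite -hn mem_nth.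
case: (ltngtP (index u c) i) => h //.
  by have := hb _ h; rewrite nth_index // eqxx.
have := @before_find _ 0 (pred1 u) c i h; rewrite /= hn eqxx //.
Qed.

Lemma count_two (x y j k : nat) : x != y ->
  count (fun t => (t == x) || (t == y)) (iota j k) = (x \in iota j k) + (y \in iota j k).
Proof.
move=> xy; have := count_predUI (pred1 x) (pred1 y) (iota j k).
have -> : count (predI (pred1 x) (pred1 y)) (iota j k) = 0.
  apply/eqP; rewrite -leqn0 leqNgt -has_count; apply/hasP => -[t _ /= /andP [/eqP -> /eqP h]].
  by rewrite h eqxx in xy.
rewrite addn0 !count_uniq_mem ?iota_uniq // => <-.
Qed.

Lemma interlace_pos n s u w au bu aw bw : Pos n s u (au, bu) -> Pos n s w (aw, bw) ->
  u != w -> interlace n s u w = betw au bu aw (+) betw au bu bw.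
Proof.
have betwC a b x : betw a b x = betw b a x by rewrite /betw orbC.
wlog lt : au bu / au < bu.
  move=> H hu hw uw; have hne : au != bu by case/and4P: hu.
  case: (ltngtP au bu) => h; first exact: H.
    by rewrite (H bu au h (PosC hu) hw uw) !(betwC bu au).
  by rewrite h eqxx in hne.
move=> hu hw uw.
have [hau hbu _ _] := and4P hu.
have [haw hbw hawbw _] := and4P hw.
have Pu := PosP hu; have Pw := PosP hw.
rewrite /= in hau hbu haw hbw hawbw Pu Pw.
rewrite /interlace.
set c := circuitA n s.
have hc : c = map (cf n s) (iota 0 (2 * n).+2) by [].
have sc : size c = (2 * n).+2 by rewrite hc size_map size_iota.
have nc t : t < (2 * n).+2 -> nth 0 c t = cf n s t.
  by move=> ht; rewrite hc (nth_map 0) ?size_iota // nth_iota.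
have -> : index u c = au.
  apply: index_pos; first by rewrite sc.
    by apply/eqP; rewrite nc // Pu // eqxx.
  move=> t ht; rewrite nc; last by lia.
  by rewrite Pu; [lia | lia].
have -> : index u (drop au.+1 c) = bu - au.+1.
  apply: index_pos; first by rewrite size_drop sc; lia.
    rewrite nth_drop; apply/eqP; rewrite nc; last by lia.
    by rewrite Pu; [lia | lia].
  move=> t ht; rewrite nth_drop nc; last by lia.
  by rewrite Pu; [lia | lia].
rewrite hc -map_drop -map_take drop_iota take_iota count_map.
rewrite (@eq_in_count _ _ (fun t => (t == aw) || (t == bw))); last first.
  move=> t; rewrite mem_iota => /andP [_ ht] /=; apply: Pw; lia.
rewrite count_two // !mem_iota.
have -> : (0 + au.+1 <= aw < 0 + au.+1 + minn (bu - au.+1) ((2 * n).+2 - au.+1)) = betw au bu aw.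
  rewrite /betw; lia.
have -> : (0 + au.+1 <= bw < 0 + au.+1 + minn (bu - au.+1) ((2 * n).+2 - au.+1)) = betw au bu bw.
  rewrite /betw; lia.
by case: (betw au bu aw); case: (betw au bu bw).
Qed.


Lemma cf_even n s k : k < n -> cf n s k.*2 = seg_left (nth 0%R s k).
Proof.
move=> hk; rewrite /cf /seg_end odd_double /nonint_end.
have -> : (k.*2.+1 == (2 * n).+1) = false by apply/eqP; lia.
by rewrite /= uphalf_double.
Qed.

Lemma cf_odd n s k : k < n -> cf n s k.*2.+1 = seg_right (nth 0%R s k).
Proof.
move=> hk; rewrite /cf /seg_end /= odd_double /nonint_end.
have -> : (k.*2.+1 == (2 * n).+1) = false by apply/eqP; lia.
by rewrite /= uphalf_double.
Qed.

Lemma cf_2n n s : cf n s n.*2 = n.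
Proof. by rewrite /cf /seg_end odd_double /nonint_end -mul2n eqxx. Qed.

Lemma cf_2n1 n s : cf n s n.*2.+1 = 0.
Proof. by rewrite /cf /seg_end /= odd_double /nonint_end -mul2n eqxx. Qed.

Definition gp (x : int) : seq nat := [:: seg_left x; seg_right x].

Lemma map_cf_pairs n s k : k <= n -> size s = n ->
  map (cf n s) (iota 0 k.*2) = flatten (map gp (take k s)).
Proof.
move=> + hs; elim: k => [|k IH] hk; first by rewrite take0.
rewrite doubleS -addn2 iotaD map_cat IH; last by lia.
rewrite (take_nth 0%R) ?hs //.
rewrite -cats1 map_cat flatten_cat /= ?cats0 /gp add0n.
by rewrite cf_even ?cf_odd //; lia.
Qed.

Lemma seg_cnt (x : int) v : x != 0%R ->
  (seg_left x == v) + (seg_right x == v) = (absz x == v.+1) + (absz x == v).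
Proof.
case: x => [[|k]|k] //= _; rewrite /seg_left /seg_right /=.
  by rewrite addnC.
Qed.

Lemma cnt_flat (l : seq int) v : all (fun x => x != 0%R) l ->
  count (pred1 v) (flatten (map gp l)) =
  count (fun x => absz x == v.+1) l + count (fun x => absz x == v) l.
Proof.
elim: l => [|x l IH] //= /andP [hx hl].
rewrite IH // addnA (seg_cnt v hx); lia.
Qed.

Lemma count_circ n s v : signed_perm n s -> v <= n -> count (pred1 v) (circuitA n s) = 2.
Proof.
case/andP => /eqP hs hp hv.
have -> : circuitA n s = map (cf n s) (iota 0 n.*2) ++ [:: n; 0].
  rewrite /circuitA -mul2n -addn2 iotaD map_cat; congr (_ ++ _).
  by have := cf_2n n s; have := cf_2n1 n s; rewrite /cf -mul2n /= add0n => -> ->.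
rewrite map_cf_pairs // count_cat take_oversize ?hs // cnt_flat; last first.
  apply/allP => x hx; have : absz x \in iota 1 n by rewrite -(perm_mem hp) map_f.
  by rewrite mem_iota; case: x hx => [[|k]|k].
have ca k : count (fun x : int => absz x == k) s = (k \in iota 1 n).
  by rewrite -count_uniq_mem ?iota_uniq // -(permP hp) count_map.
rewrite !ca !mem_iota /=.
case: v hv => [|v] hv /=; lia.
Qed.

Lemma count0_pos (c : seq nat) v : count (pred1 v) c = 0 ->
  forall t, t < size c -> (nth 0 c t == v) = false.
Proof.
move=> h t ht; apply/negP => /eqP hv.
have : v \in c by rewrite -hv mem_nth.
by rewrite -has_pred1 has_count h.
Qed.

Lemma count1_pos (c : seq nat) v : count (pred1 v) c = 1 ->
  exists2 a, a < size c & forall t, t < size c -> (nth 0 c t == v) = (t == a).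
Proof.
elim: c => [|x c IH] //=; case: (eqVneq x v) => [->|hx] /=.
  rewrite add1n => -[] /count0_pos h; exists 0 => // -[|t] ht; [by rewrite /= !eqxx | exact: h].
rewrite add0n => /IH [a ha H]; exists a.+1 => // -[|t] ht /=; first by rewrite (negbTE hx).
exact: H.
Qed.

Lemma count2_pos (c : seq nat) v : count (pred1 v) c = 2 ->
  exists a, exists b, [/\ a < size c, b < size c, a != b &
    forall t, t < size c -> (nth 0 c t == v) = (t == a) || (t == b)].
Proof.
elim: c => [|x c IH] //=; case: (eqVneq x v) => [->|hx] /=.
  rewrite add1n => -[] /count1_pos [a ha H]; exists 0, a.+1; split => // -[|t] ht; [by rewrite /= !eqxx | exact: H].
rewrite add0n => /IH [a [b [ha hb hab H]]]; exists a.+1, b.+1; split => //.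
move=> [|t] ht /=; first by rewrite (negbTE hx).
exact: H.
Qed.

Lemma pos_exists n s v : signed_perm n s -> v <= n -> exists p, Pos n s v p.
Proof.
move=> hsp hv; have := count_circ hsp hv; move=> /count2_pos [a [b [ha hb hab H]]].
have sc : size (circuitA n s) = (2 * n).+2 by rewrite size_map size_iota.
rewrite sc in ha hb H.
exists (a, b); apply/and4P; split => //.
apply/allP => t; rewrite mem_iota add0n => /andP [_ ht] /=; apply/eqP.
rewrite -H // (nth_map 0) ?size_iota // nth_iota //.
Qed.

Definition posv n s v : nat * nat :=
  if [pick p : 'I_((2 * n).+2) * 'I_((2 * n).+2) | Pos n s v (nat_of_ord p.1, nat_of_ord p.2)]
  is Some p then (nat_of_ord p.1, nat_of_ord p.2) else (0, 0).

Lemma posvP n s v : signed_perm n s -> v <= n -> Pos n s v (posv n s v).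
Proof.
move=> hsp hv; rewrite /posv; case: pickP => [p //|H].
have [[a b] hp] := pos_exists hsp hv.
have [ha hb _] : [/\ a < (2 * n).+2, b < (2 * n).+2 & true] by case/and4P: hp.
by have := H (Ordinal ha, Ordinal hb); rewrite /= hp.
Qed.


Lemma nth_reversal i j (s : seq int) k : i <= j -> j < size s ->
  nth 0%R (reversal i j s) k =
  if (i <= k) && (k <= j) then (- nth 0%R s (i + j - k))%R else nth 0%R s k.
Proof.
move=> hij hj; rewrite /reversal nth_cat size_take.
have -> : (if i < size s then i else size s) = i by case: ltnP => //; lia.
case: (ltnP k i) => hki /=.
  by rewrite nth_take.
rewrite nth_cat size_map size_rev size_drop size_take.
have -> : (if j.+1 < size s then j.+1 else size s) = j.+1 by case: ltnP => //; lia.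
case: (ltnP (k - i) (j.+1 - i)) => hk.
  have -> : k <= j by lia.
  have sz : size (drop i (take j.+1 s)) = j.+1 - i.
    by rewrite size_drop size_take; case: ltnP; lia.
  rewrite (nth_map 0%R) ?size_rev ?sz // nth_rev ?sz // nth_drop nth_take; last by lia.
  congr (- nth _ _ _)%R; lia.
have -> : k <= j = false by lia.
rewrite nth_drop; congr nth; lia.
Qed.

Lemma size_reversal i j (s : seq int) : i <= j -> j < size s -> size (reversal i j s) = size s.
Proof.
move=> hij hj; rewrite /reversal !size_cat size_map size_rev !size_drop !size_take.
case: (ltnP i (size s)) => h1; case: (ltnP j.+1 (size s)) => h2; set z := size s in hj h1 h2 *; lia.
Qed.

Lemma signed_perm_rev n i j s : signed_perm n s -> i <= j -> j < n ->
  signed_perm n (reversal i j s).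
Proof.
case/andP => /eqP hs hp hij hj; apply/andP; split.
  by rewrite size_reversal ?hs.
apply: perm_trans hp.
have {2}-> : s = take i s ++ drop i (take j.+1 s) ++ drop j.+1 s.
  by rewrite catA -{1}(take_takel s (_ : i <= j.+1)) ?cat_take_drop //; lia.
rewrite /reversal !map_cat perm_cat2l perm_cat2r -map_comp.
rewrite (@eq_map _ _ (absz \o _) absz); last by move=> x /=; rewrite abszN.
by rewrite map_rev perm_rev.
Qed.

Lemma seg_left_opp x : seg_left (- x)%R = seg_right x.
Proof. by case: x => [[|k]|k]. Qed.

Lemma seg_right_opp x : seg_right (- x)%R = seg_left x.
Proof. by case: x => [[|k]|k]. Qed.

Definition inR (lo hi x : nat) : bool := (lo <= x) && (x <= hi).
Definition sig (lo hi x : nat) : nat := if inR lo hi x then lo + hi - x else x.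

Lemma sigK lo hi x : sig lo hi (sig lo hi x) = x.
Proof. rewrite /sig; case h1: (inR lo hi x); case: ifP; rewrite /inR in h1 *; lia. Qed.

Lemma cf_rev n i j s t : i <= j -> j < n -> size s = n -> t < (2 * n).+2 ->
  cf n (reversal i j s) t = cf n s (sig i.*2 j.*2.+1 t).
Proof.
move=> hij hj hs ht.
case: (ltnP t n.*2) => htn; last first.
  have -> : sig i.*2 j.*2.+1 t = t by rewrite /sig /inR; case: ifP => //; lia.
  have [->|->] : t = n.*2 \/ t = n.*2.+1 by lia.
    by rewrite !cf_2n.
  by rewrite !cf_2n1.
have := odd_double_half t; set k := t./2 => htk.
have hk : k < n by lia.
case: (boolP (odd t)) htk => ho /= htk.
  have -> : t = k.*2.+1 by lia.
  rewrite cf_odd // nth_reversal ?hs //.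
  case: (boolP ((i <= k) && (k <= j))) => hr.
    have -> : sig i.*2 j.*2.+1 k.*2.+1 = (i + j - k).*2 by rewrite /sig /inR; case: ifP; lia.
    by rewrite cf_even ?seg_right_opp //; lia.
  have -> : sig i.*2 j.*2.+1 k.*2.+1 = k.*2.+1 by rewrite /sig /inR; case: ifP; lia.
  by rewrite cf_odd.
have -> : t = k.*2 by lia.
rewrite cf_even // nth_reversal ?hs //.
case: (boolP ((i <= k) && (k <= j))) => hr.
  have -> : sig i.*2 j.*2.+1 k.*2 = (i + j - k).*2.+1 by rewrite /sig /inR; case: ifP; lia.
  by rewrite cf_odd ?seg_left_opp //; lia.
have -> : sig i.*2 j.*2.+1 k.*2 = k.*2 by rewrite /sig /inR; case: ifP; lia.
by rewrite cf_even.
Qed.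

Lemma Pos_rev n i j s v a b : i <= j -> j < n -> size s = n -> Pos n s v (a, b) ->
  Pos n (reversal i j s) v (sig i.*2 j.*2.+1 a, sig i.*2 j.*2.+1 b).
Proof.
move=> hij hj hs hp; have [ha hb hab _] := and4P hp; have H := PosP hp.
rewrite /= in ha hb hab H.
have sm x : x < (2 * n).+2 -> sig i.*2 j.*2.+1 x < (2 * n).+2.
  by rewrite /sig /inR; case: ifP; lia.
apply/and4P; split; [exact: sm ha | exact: sm hb | | ].
  by apply: contra hab => /eqP /(congr1 (sig i.*2 j.*2.+1)); rewrite !sigK => ->.
apply/allP => t; rewrite mem_iota add0n => /andP [_ ht]; apply/eqP.
rewrite cf_rev // H; last exact: sm.
by rewrite -(can_eq (@sigK i.*2 j.*2.+1) (sig _ _ t)) sigK -(can_eq (@sigK i.*2 j.*2.+1) (sig _ _ t) b) sigK.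
Qed.


Lemma adjH_entry n s (P : nat -> nat * nat) :
  (forall v : 'I_n.+1, Pos n s v (P v)) -> forall i j : 'I_n.+1,
  adjH n s i j = (if i == j then (odd (P i).1 == odd (P i).2 : nat)%:R
                  else ((betw (P i).1 (P i).2 (P j).1 (+) betw (P i).1 (P i).2 (P j).2) : nat)%:R)%R.
Proof.
move=> HP i j; rewrite mxE; case: (eqVneq i j) => [e|h]; [subst j | ].
  by have := HP i; case: (P i) => a b hp; rewrite (oriented_pos hp).
have := HP i; have := HP j; case: (P i) => a b; case: (P j) => c d hj hi.
rewrite (interlace_pos hi hj) //; apply/eqP => hij; move: h; rewrite -(inj_eq (@ord_inj _)) hij eqxx.
Qed.

Lemma Pos_disj n s v w a b c d : Pos n s v (a, b) -> Pos n s w (c, d) -> v != w ->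
  [&& a != c, a != d, b != c & b != d].
Proof.
move=> hv hw vw; have [ha hb _ _] := and4P hv; have [hc hd _ _] := and4P hw.
have Pv := PosP hv; have Pw := PosP hw; rewrite /= in ha hb hc hd Pv Pw.
have ea : cf n s a = v by apply/eqP; rewrite Pv // eqxx.
have eb : cf n s b = v by apply/eqP; rewrite Pv // eqxx orbT.
have ec : cf n s c = w by apply/eqP; rewrite Pw // eqxx.
have ed : cf n s d = w by apply/eqP; rewrite Pw // eqxx orbT.
apply/and4P; split; apply/eqP => h; move: vw;
  [rewrite -ea -ec | rewrite -ea -ed | rewrite -eb -ec | rewrite -eb -ed]; by rewrite h eqxx.
Qed.

Lemma sig_betw3 lo hi u v w :
  u != v -> u != w -> v != w ->
  betw (sig lo hi u) (sig lo hi v) (sig lo hi w) =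
  betw u v w (+) ((inR lo hi u (+) inR lo hi v) && inR lo hi w).
Proof.
rewrite /sig /betw.
move=> /eqP h1 /eqP h2 /eqP h3.
case: (boolP (inR lo hi u)); case: (boolP (inR lo hi v)); case: (boolP (inR lo hi w));
rewrite /inR => H1 H2 H3; lia.
Qed.

Lemma odd_sig i j x : odd (sig i.*2 j.*2.+1 x) = inR i.*2 j.*2.+1 x (+) odd x.
Proof.
rewrite /sig; case: ifP => h //=.
rewrite oddB; last by move: h; rewrite /inR; lia.
by rewrite oddD /= !odd_double.
Qed.

Lemma F2_lem (E o1 o2 : bool) :
  ((E : nat)%:R : 'F_2)%R = (((E (+) (o1 && o2)) : nat)%:R + (o1 : nat)%:R * (o2 : nat)%:R)%R.
Proof. by case: E; case: o1; case: o2; apply/eqP. Qed.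

Lemma rank_step n s i j : signed_perm n s -> i <= j -> j < n ->
  \rank (adjH n s) <= (\rank (adjH n (reversal i j s))).+1.
Proof.
move=> hsp hij hj; have hs : size s = n by case/andP: hsp => /eqP.
pose P v := posv n s v.
have HP (v : 'I_n.+1) : Pos n s v (P v) by apply: posvP; rewrite // -ltnS.
pose sg := sig i.*2 j.*2.+1.
pose P' v := (sg (P v).1, sg (P v).2).
have HP' (v : 'I_n.+1) : Pos n (reversal i j s) v (P' v).
  by have := HP v; rewrite /P'; case: (P v) => a b hp; exact: Pos_rev.
pose ir x := inR i.*2 j.*2.+1 x.
pose u : 'cV['F_2]_n.+1 := (\col_k (((ir (P k).1 (+) ir (P k).2) : nat)%:R))%R.
have E : adjH n s = (adjH n (reversal i j s) + u *m u^T)%R.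
  apply/matrixP => a b.
  have e1 := adjH_entry HP a b; have e2 := adjH_entry HP' a b.
  rewrite mxE in e1; rewrite mxE in e2.
  rewrite !mxE big_ord1 !mxE e1 e2 /P'.
  case: eqP => [<-|ab].
    rewrite !odd_sig -/(ir _) -/(ir _) (F2_lem _ (ir (P a).1 (+) ir (P a).2) (ir (P a).1 (+) ir (P a).2)).
    by rewrite andbb; congr (_%:R + _)%R; case: (odd _); case: (odd _); case: (ir _); case: (ir _).
  have ab' : nat_of_ord a != b by apply/eqP => h; apply: ab; exact: ord_inj.
  have := Pos_disj (HP a) (HP b) ab'; have := HP a; have := HP b.
  rewrite /sg /ir; case: (P a) => x y; case: (P b) => z w /= hb ha.
  have [_ _ xy _] := and4P ha; have [_ _ zw _] := and4P hb; rewrite /= in xy zw.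
  case/and4P => h1 h2 h3 h4.
  rewrite !sig_betw3 // ?(eq_sym y) //.
  rewrite (F2_lem _ (inR i.*2 j.*2.+1 x (+) inR i.*2 j.*2.+1 y) (inR i.*2 j.*2.+1 z (+) inR i.*2 j.*2.+1 w)).
  congr (_%:R + _)%R.
  by case: (betw x y z); case: (betw x y w); case: (inR _ _ x); case: (inR _ _ y);
     case: (inR _ _ z); case: (inR _ _ w).
rewrite E; apply: leq_trans (mxrank_add _ _) _.
have h1 : \rank (u *m u^T)%R <= 1 by apply: leq_trans (mxrankM_maxl _ _) (rank_leq_col _).
set r := \rank _ in h1 *; set r' := \rank _; lia.
Qed.


Definition Pid n (v : nat) : nat * nat :=
  if v is v'.+1 then (v'.*2.+1, v'.*2.+2) else (0, (2 * n).+1).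

Lemma cf_id_even n k : k < n -> cf n (id_sperm n) k.*2 = k.
Proof.
move=> hk; rewrite cf_even // /id_sperm (nth_map 0) ?size_iota // nth_iota //.

Qed.

Lemma cf_id_odd n k : k < n -> cf n (id_sperm n) k.*2.+1 = k.+1.
Proof.
move=> hk; rewrite cf_odd // /id_sperm (nth_map 0) ?size_iota // nth_iota //.

Qed.

Lemma Pos_id n (v : 'I_n.+1) : Pos n (id_sperm n) v (Pid n v).
Proof.
have hv := ltn_ord v.
apply/and4P; split.
- by case: (nat_of_ord v) hv => [|v'] /= hv; lia.
- by case: (nat_of_ord v) hv => [|v'] /= hv; lia.
- by case: (nat_of_ord v) hv => [|v'] /= hv; lia.
apply/allP => t; rewrite mem_iota add0n => /andP [_ ht]; apply/eqP.
have := odd_double_half t; set k := t./2 => htk.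
case: (ltnP k n) => hk.
  case: (boolP (odd t)) htk => ho /= htk.
    have -> : t = k.*2.+1 by lia.
    rewrite cf_id_odd //; case: (nat_of_ord v) hv => [|v'] /= hv; lia.
  have -> : t = k.*2 by lia.
  rewrite cf_id_even //; case: (nat_of_ord v) hv => [|v'] /= hv; lia.
case: (boolP (odd t)) htk => ho /= htk.
  have -> : t = n.*2.+1 by lia.
  rewrite cf_2n1; case: (nat_of_ord v) hv => [|v'] /= hv; lia.
have -> : t = n.*2 by lia.
rewrite cf_2n; case: (nat_of_ord v) hv => [|v'] /= hv; lia.
Qed.

Lemma adjH_id n : adjH n (id_sperm n) = 0%R.
Proof.
apply/matrixP => a b; rewrite (adjH_entry (@Pos_id n)) mxE.
have ha := ltn_ord a; have hb := ltn_ord b.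
case: (eqVneq a b) => [e|h].
  by rewrite /Pid; case: (nat_of_ord a) => [|a'] /=; rewrite ?oddM ?odd_double ?andbF /=; apply/eqP.
have h' : nat_of_ord a != b by rewrite (inj_eq (@ord_inj _)).
have H0 (c : bool) : c = false -> ((c : nat)%:R : 'F_2)%R = 0%R by move=> ->.
move: h' ha hb; rewrite /Pid /betw.
case: (nat_of_ord a) => [|a']; case: (nat_of_ord b) => [|b'] /= h' ha hb.
- by move: h'.
  by apply: H0; lia.
- by apply: H0; lia.
by apply: H0; lia.
Qed.

Lemma main_ind n (rs : seq (nat * nat)) : forall s, signed_perm n s -> valid_revs n rs ->
  apply_revs rs s = id_sperm n -> \rank (adjH n s) <= size rs.
Proof.
elim: rs => [|[i j] rs IH] s hs /=.
  by move=> _ ->; rewrite adjH_id mxrank0.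
case/andP => /andP [hij hj] hv ha.
apply: leq_trans (rank_step hs hij hj) _.
rewrite ltnS; apply: IH => //; exact: signed_perm_rev.
Qed.

Theorem mainTheorem2 (n : nat) (s : seq int) (hs : signed_perm n s)
  (d : nat) (hd : reversal_distance n s d) :
  \rank (adjH n s) <= d.
Proof.
case: hd => [[rs [/andP [hv /eqP ha] <-]] _].
exact: main_ind hs hv ha.
Qed.
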